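(* Let $G$ be a finite group of $F$-class $c \ge 1$ with covering group $G^*$ (with respect to some finite generating tuple of $G$), multiplicator $M$ and nucleus $N$. If $U$ is an allowable subgroup of $G^*$, then $G^*/U$ is a descendant of $G$.
   Context: For a finite group $X$, $F(X)$ is its Fitting subgroup; the $F$-central series is $\nu_0(X)=F(X)$ and $\nu_{i+1}(X)$ is the smallest normal subgroup $N'$ of $F(X)$ with $N'\le\nu_i(X)$ such that $\nu_i(X)/N'$ is centralized by $F(X)$ and is a direct product of elementary abelian groups; the $F$-class is the least $c$ with $\nu_c(X)=1$, and the $F$-rank is $|\nu_0(X)/\nu_1(X)|$. Covering group: with $g_1,\dots,g_n$ generating $G$, $F$ free on $f_1,\dots,f_n$, $\mu:F\to G$, $f_i\mapsto g_i$, $R=\ker\mu$, $L=\mu^{-1}(F(G))$, $k$ the product of the distinct primes dividing the $F$-rank of $G$: $G^*=F/[R,L]R^k$, $M=R/[R,L]R^k$ (so $G^*/M\cong G$). The nucleus is $N=\nu_c(G^* )$. A subgroup $U$ of $G^*$ is allowable if $U$ is a proper subgroup of $M$, normal in $G^*$, with $M=NU$. A group $H$ is a descendant of $G$ if $H$ has $F$-class $c+1$ and $H/\nu_c(H)\cong G$. *)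

(* Defs.v *)
From HB Require Import structures.
From mathcomp Require Import all_boot all_fingroup all_solvable.
Set Implicit Arguments. Unset Strict Implicit. Unset Printing Implicit Defensive.
Import GroupScope.

(* Possibly infinite groups (needed for the free group F).            *)
Record grp := Grp {
  gcar :> Type;
  gmul : gcar -> gcar -> gcar;
  ginv : gcar -> gcar;
  gone : gcar;
  gmulA : associative gmul;
  gmul1 : left_id gone gmul;
  gmulV : left_inverse gone ginv gmul }.

Definition fin_grp (gT : finGroupType) : grp :=
  @Grp gT (@mulg gT) (@invg gT) 1 (@mulgA gT) (@mul1g gT) (@mulVg gT).

Definition is_ghom (A B : grp) (phi : A -> B) : Prop :=
  forall x y, phi (gmul x y) = gmul (phi x) (phi y).

Inductive gen_by (A : grp) (S : A -> Prop) : A -> Prop :=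
| gen_in x : S x -> gen_by S x
| gen_one : gen_by S (gone A)
| gen_mul x y : gen_by S x -> gen_by S y -> gen_by S (gmul x y)
| gen_inv x : gen_by S x -> gen_by S (ginv x).

Definition free_on (A : grp) (n : nat) (f : 'I_n -> A) : Prop :=
  (forall x, gen_by (fun y => exists i, y = f i) x) /\
  (forall (B : grp) (h : 'I_n -> B),
     exists phi : A -> B, is_ghom phi /\ forall i, phi (f i) = h i).

Definition gcomm (A : grp) (x y : A) : A :=
  gmul (gmul (ginv x) (ginv y)) (gmul x y).
Definition gpow (A : grp) (x : A) (k : nat) : A := iter k (gmul x) (gone A).

Section FSeries.
Variable gT : finGroupType.
Implicit Types X V N : {group gT}.

(* N is a candidate for nu_{i+1}(X) when V = nu_i(X):
   N normal subgroup of F(X), N <= V, V/N centralized by F(X),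
   V/N a direct product of elementary abelian groups *)
Definition Fcand X V N : bool :=
  [&& N <| 'F(X), N \subset V, [~: V, 'F(X)] \subset N,
      abelian (V / N)
    & all (fun p => p.-abelem 'O_p(V / N)) (primes #|V / N|)].

Fixpoint Fnu X (i : nat) : {group gT} :=
  match i with
  | 0 => 'F(X)%G
  | i.+1 => let V := Fnu X i in
            [group of \bigcap_(N : {group gT} | Fcand X V N) N]
  end.

Definition has_Fclass X (c : nat) : bool :=
  (Fnu X c == 1 :> {set gT}) && [forall j : 'I_c, Fnu X j != 1 :> {set gT}].

Definition Frank X : nat := #|Fnu X 0 / Fnu X 1|.

Definition Fk X : nat := \prod_(p <- primes (Frank X)) p.

End FSeries.

Definition descendant (hT gT : finGroupType) (H : {group hT}) (G : {group gT})
  (c : nat) : bool :=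
  has_Fclass H c.+1 && (H / Fnu H c \isog G).

(* R = ker mu, L = mu^-1(F(G)), K = [R,L] R^k *)
Definition covR (A : grp) (gT : finGroupType) (mu : A -> gT) (x : A) : Prop :=
  mu x = 1.
Definition covL (A : grp) (gT : finGroupType) (G : {group gT}) (mu : A -> gT)
  (x : A) : Prop := mu x \in 'F(G).
Definition covK (A : grp) (gT : finGroupType) (G : {group gT}) (mu : A -> gT)
  : A -> Prop :=
  gen_by (fun z => (exists r l, covR mu r /\ covL G mu l /\ z = gcomm r l)
                 \/ (exists r, covR mu r /\ z = gpow r (Fk G))).

(* (sT, Gs, pi) is a realization of G^* = F/K: pi : F -> Gs is a surjective
   homomorphism with kernel K, so Gs is isomorphic to F/[R,L]R^k. *)
Definition covering_map (A : grp) (gT : finGroupType) (G : {group gT})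
  (mu : A -> gT) (sT : finGroupType) (Gs : {group sT}) (pi : A -> sT) : Prop :=
  [/\ @is_ghom A (fin_grp sT) pi,
      forall x, pi x \in Gs,
      forall y, y \in Gs -> exists x, pi x = y
    & forall x, pi x = 1 <-> covK G mu x].

(* M = R / K, i.e. the image of R in G^* *)
Definition is_multiplicator (A : grp) (gT : finGroupType) (mu : A -> gT)
  (sT : finGroupType) (pi : A -> sT) (M : {set sT}) : Prop :=
  forall y, y \in M <-> exists x, covR mu x /\ pi x = y.

Definition allowable (sT : finGroupType) (Gs M N U : {group sT}) : bool :=
  [&& U \proper M, U <| Gs & M :==: N * U].

(* Main.v *)
Require Import Defs.
From HB Require Import structures.
From mathcomp Require Import all_boot all_fingroup all_solvable.
Set Implicit Arguments. Unset Strict Implicit. Unset Printing Implicit Defensive.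
Import GroupScope.

Definition rad (n : nat) : nat := \prod_(p <- primes n) p.

Lemma logn_prod_primes p (s : seq nat) : uniq s -> all prime s ->
  logn p (\prod_(q <- s) q) = (p \in s).
Proof.
elim: s => [|q s IH] /=; first by rewrite big_nil logn1.
case/andP=> qs us /andP[pq ps]; rewrite big_cons lognM; last first.
- by rewrite big_seq; apply: prodn_cond_gt0 => i /(allP ps)/prime_gt0.
- exact: prime_gt0.
rewrite IH // logn_prime // inE.
by case: eqP => [->|] //=; rewrite (negbTE qs).
Qed.

Lemma rad_gt0 n : 0 < rad n.
Proof. by rewrite /rad big_seq; apply: prodn_cond_gt0 => i; rewrite mem_primes => /and3P[/prime_gt0]. Qed.

Lemma rad_logn p n : logn p (rad n) <= 1.
Proof.
rewrite /rad logn_prod_primes ?primes_uniq //; first by case: (p \in _).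
by apply/allP => q; rewrite mem_primes => /and3P[].
Qed.

Lemma dvd_rad m n p : m %| n -> 0 < n -> p \in primes m -> p %| rad n.
Proof.
move=> mn n0; rewrite mem_primes => /and3P[pp m0 pm].
have pn : p \in primes n by rewrite mem_primes pp n0 (dvdn_trans pm mn).
by rewrite /rad (big_rem _ pn) /= dvdn_mulr.
Qed.

Section FSeriesLemmas.
Variable gT : finGroupType.
Implicit Types X V N : {group gT}.

Lemma cand_of X V N r : V \subset 'F(X) -> 0 < r -> (forall p, logn p r <= 1) ->
  N <| 'F(X) -> N \subset V -> [~: V, 'F(X)] \subset N ->
  (forall x, x \in V -> x ^+ r \in N) -> Fcand X V N.
Proof.
move=> sVF r0 Hr nsN sNV sVFN Hpow.
have nNV : V \subset 'N(N) := subset_trans sVF (normal_norm nsN).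
have abVN : abelian (V / N).
  by apply: sub_der1_abelian; apply: subset_trans sVFN; apply: commgS.
rewrite /Fcand nsN sNV sVFN abVN /=.
apply/allP => p; rewrite mem_primes => /and3P[pr _ _].
rewrite abelemE // (abelianS (pcore_sub _ _) abVN) /=.
apply/exponentP => a Oa.
have Qa : a \in V / N := subsetP (pcore_sub _ _) a Oa.
have ar1 : a ^+ r = 1.
  case/morphimP: Qa => x Nx Vx ->; rewrite -morphX //; apply: coset_id; exact: Hpow.
have pa : p.-elt a := mem_p_elt (pcore_pgroup _ _) Oa.
apply/eqP; rewrite -order_dvdn.
have dr : #[a] %| r by rewrite order_dvdn ar1.
rewrite -(part_pnat_id pa) p_part.
have le1 : logn p #[a] <= 1 by apply: leq_trans (Hr p); apply: dvdn_leq_log.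
by apply: (@dvdn_trans (p ^ 1)); [exact: dvdn_exp2l | rewrite expn1].
Qed.

Lemma cand_pow X V N r : V \subset 'F(X) ->
  (forall p, p \in primes #|V| -> p %| r) -> Fcand X V N ->
  forall x, x \in V -> x ^+ r \in N.
Proof.
move=> sVF Hr /and5P[nsN sNV _ abVN /allP Hab] x Vx.
have nNV : V \subset 'N(N) := subset_trans sVF (normal_norm nsN).
have Nx : x \in 'N(N) := subsetP nNV x Vx.
apply: coset_idr; first exact: groupX.
rewrite morphX //; set a := coset N x.
have Qa : a \in V / N := mem_quotient N Vx.
apply/eqP; rewrite -order_dvdn; apply/dvdn_partP; first exact: order_gt0.
move=> p; rewrite mem_primes => /and3P[pr _ pa].
have pQ : p \in primes #|V / N|.
  by rewrite mem_primes pr cardG_gt0 (dvdn_trans pa (order_dvdG Qa)).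
have := Hab p pQ; rewrite abelemE // => /andP[_ expO].
have Oap : a.`_p \in 'O_p(V / N).
  apply: (subsetP (pcore_max _ _)) (cycle_id _); first exact: p_elt_constt.
  rewrite -sub_abelian_normal // cycle_subG.
  by apply: (subsetP _ _ (cycle_constt p a)); rewrite cycle_subG.
rewrite -order_constt; apply: dvdn_trans (dvdn_exponent Oap) _.
apply: dvdn_trans expO _; apply: Hr.
by rewrite mem_primes pr cardG_gt0 (dvdn_trans (dvdn_trans pa (order_dvdG Qa)) (dvdn_quotient _ _)).
Qed.

Lemma Fnu_norm X i : Fnu X i <| 'F(X).
Proof.
elim: i => [|i IH] /=; first exact: normal_refl.
set V := Fnu X i.
have sVF : V \subset 'F(X) := normal_sub IH.
have cV : Fcand X V V.
  apply: (@cand_of _ _ _ 1) => //; first by move=> p; rewrite logn1.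
  by rewrite (commg_subl V ('F(X))%G) normal_norm.
apply/andP; split; first exact: subset_trans (bigcap_inf _ cV) sVF.
apply: norms_bigcap; apply/bigcapsP => N /and5P[nsN _ _ _ _]; exact: normal_norm.
Qed.

Lemma Fnu_min X i N : Fcand X (Fnu X i) N -> Fnu X i.+1 \subset N.
Proof. by move=> cN; apply: (bigcap_inf _ cN). Qed.



Lemma Fnu_cand X i : Fcand X (Fnu X i) (Fnu X i.+1).
Proof.
set V := Fnu X i.
have sVF : V \subset 'F(X) := normal_sub (Fnu_norm X i).
have sVX : V \subset X := subset_trans sVF (Fitting_sub X).
apply: (@cand_of _ _ _ (rad #|X|)) => //.
- exact: rad_gt0.
- by move=> p; apply: rad_logn.
- exact: Fnu_norm.
- have cV : Fcand X V V.
    apply: (@cand_of _ _ _ 1) => //; first by move=> p; rewrite logn1.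
    - exact: Fnu_norm.
    - by rewrite (commg_subl V ('F(X))%G) normal_norm // Fnu_norm.
  exact: Fnu_min cV.
- by apply/bigcapsP => N /and5P[].
- move=> x Vx; apply/bigcapP => N cN; apply: (cand_pow sVF _ cN Vx) => p.
  by apply: dvd_rad; [apply: cardSg | apply: cardG_gt0].
Qed.

End FSeriesLemmas.
Section Transport.
Variables aT rT : finGroupType.
Variable D : {group aT}.
Variable phi : {morphism D >-> rT}.
Variable X : {group aT}.
Hypothesis sXD : X \subset D.
Hypothesis hF : phi @* 'F(X) = 'F(phi @* X).

Lemma Fnu_morphim i : phi @* Fnu X i = Fnu (phi @* X)%G i.
Proof.
set Y := (phi @* X)%G.
have sFD : 'F(X) \subset D := subset_trans (Fitting_sub X) sXD.
have dYX : #|Y| %| #|X| := dvdn_morphim _ _.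
have HrY : forall (A : {group rT}), A \subset Y -> forall p, p \in primes #|A| -> p %| rad #|X|.
  move=> A sAY p pA; apply: (dvd_rad _ (cardG_gt0 X) pA).
  by apply: dvdn_trans dYX; apply: cardSg.
have HrX : forall (A : {group aT}), A \subset X -> forall p, p \in primes #|A| -> p %| rad #|X|.
  by move=> A sAX p pA; apply: (dvd_rad _ (cardG_gt0 X) pA); apply: cardSg.
elim: i => [|i IH] /=; first exact: hF.
set V := Fnu X i.
have nsV : V <| 'F(X) := Fnu_norm X i.
have sVF : V \subset 'F(X) := normal_sub nsV.
have sVD : V \subset D := subset_trans sVF sFD.
have sVX : V \subset X := subset_trans sVF (Fitting_sub X).
have nsV' : Fnu Y i <| 'F(Y) := Fnu_norm Y i.
have sV'F : Fnu Y i \subset 'F(Y) := normal_sub nsV'.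
have sV'Y : Fnu Y i \subset Y := subset_trans sV'F (Fitting_sub Y).
apply/eqP; rewrite eqEsubset; apply/andP; split.
- apply/bigcapsP => N' cN'.
  have [nsN' sN'V' sV'FN' _ _] := and5P cN'.
  set P := V :&: phi @*^-1 N'.
  have cP : Fcand X V [group of P].
    apply: (@cand_of _ _ _ _ (rad #|X|)) => //.
    + exact: rad_gt0.
    + by move=> p; apply: rad_logn.
    + apply/andP; split; first exact: subset_trans (subsetIl _ _) sVF.
      apply: normsI; first exact: normal_norm.
      apply: subset_trans (morphpre_norm _ _).
      by rewrite -sub_morphim_pre // hF normal_norm.
    + exact: subsetIl.
    + have sCD : [~: V, 'F(X)] \subset D.
        apply: subset_trans sFD; rewrite (commg_subr V ('F(X))%G).
        exact: subset_trans sVX (normal_norm (Fitting_normal X)).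
      apply/subsetIP; split.
        by rewrite (commg_subl V ('F(X))%G) normal_norm.
      by rewrite -sub_morphim_pre // morphimR // IH hF.
    + move=> x Vx; rewrite inE groupX //=.
      have Dx : x \in D := subsetP sVD x Vx.
      apply: mem_morphpre; first exact: groupX.
      rewrite morphX //; apply: (cand_pow sV'F _ cN'); first exact: HrY.
      by rewrite -IH; apply: mem_morphim.
  have sNP := Fnu_min cP.
  rewrite sub_morphim_pre; last exact: subset_trans (normal_sub (Fnu_norm X i.+1)) sFD.
  exact: subset_trans sNP (subsetIr _ _).
- set B := Fnu X i.+1.
  have cB : Fcand X V B := Fnu_cand X i.
  have [nsB sBV sVFB _ _] := and5P cB.
  have sBD : (B : {set aT}) \subset D := subset_trans (normal_sub nsB) sFD.
  apply: Fnu_min.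
  apply: (@cand_of _ _ _ _ (rad #|X|)) => //.
  + exact: rad_gt0.
  + by move=> p; apply: rad_logn.
  + by rewrite -hF; apply: morphim_normal.
  + by rewrite -IH; apply: morphimS.
  + by rewrite -IH -hF -morphimR // morphimS.
  + rewrite -IH => y /morphimP[x Dx Vx ->]; rewrite -morphX //; apply: mem_morphim.
      exact: groupX.
    by apply: (cand_pow sVF _ cB); first exact: HrX.
Qed.
End Transport.

Section GrpHom.
Variables (A : grp) (hT : finGroupType) (h : A -> hT).
Hypothesis hh : @is_ghom A (fin_grp hT) h.

Lemma ghom1 : h (gone A) = 1.
Proof.
have e := hh (gone A) (gone A); rewrite gmul1 /= in e.
by apply: (@mulgI _ (h (gone A))); rewrite mulg1 -e.
Qed.

Lemma ghomV x : h (ginv x) = (h x)^-1.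
Proof.
have e := hh (ginv x) x; rewrite gmulV ghom1 /= in e.
by rewrite -(mulgK (h x) (h (ginv x))) -e mul1g.
Qed.

Lemma ghomM x y : h (gmul x y) = h x * h y.
Proof. exact: hh. Qed.

Lemma ghom_pow x k : h (gpow x k) = (h x) ^+ k.
Proof. by elim: k => [|k IH] /=; rewrite ?ghom1 // ghomM IH expgS. Qed.

Lemma ghom_comm x y : h (gcomm x y) = [~ h x, h y].
Proof. by rewrite /gcomm !ghomM !ghomV /commg /conjg !mulgA. Qed.
End GrpHom.

From Stdlib Require Import ClassicalEpsilon.

Section Setup.
Variables (gT : finGroupType) (G : {group gT}) (c n : nat)
  (g : 'I_n -> gT) (F : grp) (f : 'I_n -> F) (mu : F -> gT)
  (sT : finGroupType) (Gs M U : {group sT}) (pi : F -> sT).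
Hypotheses (hG : <<[set g i | i : 'I_n]>> = G)
  (hfree : free_on f) (hmu : @is_ghom F (fin_grp gT) mu) (hmuf : forall i, mu (f i) = g i)
  (hcov : covering_map G mu Gs pi) (hM : is_multiplicator mu pi M).

Let hpi : @is_ghom F (fin_grp sT) pi. Proof. by case: hcov. Qed.
Let hin : forall x, pi x \in Gs. Proof. by case: hcov. Qed.
Let hsurj : forall y, y \in Gs -> exists x, pi x = y. Proof. by case: hcov. Qed.
Let hker : forall x, pi x = 1 <-> covK G mu x. Proof. by case: hcov. Qed.

Lemma muK x : covK G mu x -> mu x = 1.
Proof.
elim=> [z [[r [l [Rr [_ ->]]]] | [r [Rr ->]]] | | a b _ Ha _ Hb | a _ Ha].
- by rewrite ghom_comm // Rr comm1g.
- by rewrite ghom_pow // Rr expg1n.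
- exact: ghom1.
- by rewrite ghomM // Ha Hb mulg1.
- by rewrite ghomV // Ha invg1.
Qed.

Lemma mu_in x : mu x \in G.
Proof.
have [gen _] := hfree.
elim: (gen x) => [y [i ->] | | a b _ Ha _ Hb | a _ Ha].
- by rewrite hmuf -hG mem_gen //; apply/imsetP; exists i.
- by rewrite ghom1.
- by rewrite ghomM // groupM.
- by rewrite ghomV // groupV.
Qed.

Definition theta (y : sT) : gT := mu (epsilon (inhabits (gone F)) (fun x => pi x = y)).

Lemma theta_pi x : theta (pi x) = mu x.
Proof.
rewrite /theta; set x' := epsilon _ _.
have px' : pi x' = pi x by apply: (epsilon_spec (inhabits (gone F)) (fun z => pi z = pi x)); exists x.
have k : covK G mu (gmul (ginv x) x').
  by apply/hker; rewrite ghomM // ghomV // px' mulVg.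
have e := muK k; rewrite ghomM // ghomV // in e.
by rewrite -(mulKVg (mu x) (mu x')) e mulg1.
Qed.

Lemma theta_morphM : {in Gs &, {morph theta : x y / x * y}}.
Proof.
move=> a b /hsurj[x <-] /hsurj[y <-].
by rewrite -[pi x * pi y]ghomM // !theta_pi ghomM.
Qed.

Canonical thm := @Morphism sT gT Gs theta theta_morphM.

Lemma thm_im : thm @* Gs = G.
Proof.
apply/eqP; rewrite eqEsubset; apply/andP; split.
  by apply/subsetP => _ /morphimP[y _ /hsurj[x <-] ->]; rewrite /= theta_pi mu_in.
rewrite -hG gen_subG; apply/subsetP => _ /imsetP[i _ ->].
by rewrite -hmuf -theta_pi; apply: mem_morphim.
Qed.

Lemma thm_ker : 'ker thm = M.
Proof.
apply/setP => y; apply/idP/idP.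
- case/morphpreP => /hsurj[x <-]; rewrite inE /= theta_pi => /eqP Rx.
  by apply/hM; exists x.
- move/hM => [x [Rx <-]]; apply/morphpreP; split; first exact: hin.
  by rewrite /= theta_pi Rx inE.
Qed.

Definition Lbar := (thm @*^-1 'F(G))%G.

Lemma M_cent : Lbar \subset 'C(M).
Proof.
apply/centsP => l Ll m Mm.
have [Gl Fl] := morphpreP Ll.
move/hM: Mm => [r [Rr <-]].
move: Fl; have [l0 <-] := hsurj Gl; rewrite /= theta_pi => Fl.
have k : covK G mu (gcomm r l0) by apply: gen_in; left; exists r, l0.
have := proj2 (hker _) k; rewrite ghom_comm // => /eqP/commgP.
by move=> cm; apply/commute_sym.
Qed.

Lemma M_pow m : m \in M -> m ^+ Fk G = 1.
Proof.
move/hM => [r [Rr <-]]; rewrite -ghom_pow //; apply/hker.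
by apply: gen_in; right; exists r.
Qed.

Lemma M_sub_Gs : M \subset Gs.
Proof. by rewrite -thm_ker; apply: subsetIl. Qed.

Lemma M_sub_Lbar : M \subset Lbar.
Proof. by rewrite -thm_ker; apply: ker_sub_pre. Qed.

Lemma Lbar_nil : nilpotent Lbar.
Proof.
rewrite -quotient_center_nil.
set Z := 'Z(Lbar).
have sLN : Lbar \subset 'N(Z) := normal_norm (center_normal Lbar).
have sMZ : M \subset Z by rewrite subsetI M_sub_Lbar centsC M_cent.
have sLG : Lbar \subset Gs := morphpre_sub _ _.
pose fr := restrm sLN (coset_morphism Z).
have sK : 'ker thm \subset 'ker fr by rewrite ker_restrm ker_coset thm_ker subsetI M_sub_Lbar.
have := morphim_factm sK sLG Lbar.
rewrite morphim_restrm setIid => e.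
have -> : Lbar / Z = coset_morphism Z @* Lbar by [].
rewrite -e; apply: morphim_nil.
by rewrite /Lbar /= morphpreK ?Fitting_nil // thm_im Fitting_sub.
Qed.

Lemma Lbar_normal : Lbar <| Gs.
Proof.
apply/andP; split; first exact: morphpre_sub.
apply: subset_trans (morphpre_norm _ _).
by rewrite -sub_morphim_pre // thm_im normal_norm // Fitting_normal.
Qed.

Lemma thm_F : thm @* 'F(Gs) = 'F(thm @* Gs).
Proof.
apply/eqP; rewrite eqEsubset; apply/andP; split.
  apply: Fitting_max; [apply: morphim_normal | apply: morphim_nil]; 
    [exact: Fitting_normal | exact: Fitting_nil].
rewrite thm_im -{1}(morphpreK (f := thm) (R := 'F(G))) ?thm_im ?Fitting_sub //.
by apply: morphimS; apply: Fitting_max; [exact: Lbar_normal | exact: Lbar_nil].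
Qed.


Lemma cosetU_F : U <| Gs -> U \subset M -> coset U @* 'F(Gs) = 'F(coset U @* Gs).
Proof.
move=> nsU sUM.
have nUGs : Gs \subset 'N(U) := normal_norm nsU.
apply/eqP; rewrite eqEsubset; apply/andP; split.
  apply: Fitting_max; [apply: morphim_normal | apply: morphim_nil];
    [exact: Fitting_normal | exact: Fitting_nil].
have sqN : coset U @* Gs \subset coset U @* 'N(U) := morphimS _ nUGs.
have sFq : 'F(coset U @* Gs) \subset coset U @* 'N(U) := subset_trans (Fitting_sub _) sqN.
set P := coset U @*^-1 'F(coset U @* Gs).
have eP : coset U @* P = 'F(coset U @* Gs) := morphpreK sFq.
have nsP : P <| Gs.
  have : P <| coset U @*^-1 (coset U @* Gs) by rewrite morphpre_normal // Fitting_normal.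
  by rewrite morphimGK // ker_coset normal_sub.
have sPGs : P \subset Gs := normal_sub nsP.
have sPL : P \subset Lbar.
  rewrite /Lbar /= -sub_morphim_pre //.
  apply: Fitting_max; first by rewrite -thm_im; apply: morphim_normal.
  have sK : 'ker (coset_morphism U : {morphism 'N(U)%G >-> _}) \subset 'ker thm.
    by rewrite ker_coset thm_ker.
  have e := morphim_factm sK nUGs P; suff : nilpotent (thm @* P) by []; rewrite -e; apply: morphim_nil.
  have nq : nilpotent (coset U @* P) by rewrite eP; apply: Fitting_nil.
  exact: nq.
rewrite -eP; apply: morphimS; apply: Fitting_max nsP _.
exact: nilpotentS sPL Lbar_nil.
Qed.

Lemma main_setup : has_Fclass G c -> 0 < c -> allowable Gs M (Fnu Gs c) U ->
  descendant (Gs / U)%G G c.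
Proof.
move=> hcl c0 /and3P[pUM nsU /eqP eM].
have sUM := proper_sub pUM.
have hF2 := cosetU_F nsU sUM.
have eG : (thm @* Gs)%G = G by apply: val_inj; exact: thm_im.
have tr1 : forall i, thm @* Fnu Gs i = Fnu G i.
  by move=> i; rewrite -eG; apply: Fnu_morphim => //; exact: thm_F.
have eH : (coset_morphism U @* Gs)%G = (Gs / U)%G by apply: val_inj.
have tr2 : forall i, coset U @* Fnu Gs i = Fnu (Gs / U)%G i.
  by move=> i; rewrite -eH; apply: (Fnu_morphim (D := 'N(U)%G)) => //; exact: normal_norm.
have sNuGs : forall i, Fnu Gs i \subset Gs.
  by move=> i; apply: subset_trans (Fitting_sub Gs); apply: normal_sub (Fnu_norm Gs i).
have nsM : M <| Gs by rewrite -thm_ker ker_normal.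
case/andP: hcl => /eqP G1 /forallP Gj.
set N := Fnu Gs c.
have sNM : N \subset M.
  by rewrite -thm_ker ker_trivg_morphim sNuGs /= tr1 G1 subxx.
have sFL : 'F(Gs) \subset Lbar.
  by rewrite /Lbar /= -sub_morphim_pre ?Fitting_sub // thm_F thm_im.
have N1 : Fnu Gs c.+1 = 1 :> {set sT}.
  apply/trivgP; apply: Fnu_min.
  apply: (@cand_of _ _ _ _ (Fk G)).
  - exact: normal_sub (Fnu_norm Gs c).
  - exact: (rad_gt0 (Frank G)).
  - by move=> p; exact: (rad_logn p (Frank G)).
  - exact: normal1.
  - exact: sub1G.
  - have cNF : N \subset 'C('F(Gs)).
      apply: subset_trans sNM _; rewrite centsC.
      exact: subset_trans sFL M_cent.
    by rewrite (commG1P cNF).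
  - by move=> x Nx; rewrite M_pow ?inE // (subsetP sNM).
have nUM : forall i, Fnu Gs i \subset 'N(U).
  by move=> i; apply: subset_trans (sNuGs i) (normal_norm nsU).
have triv : forall i, coset U @* Fnu Gs i = 1 -> Fnu Gs i \subset U.
  move=> i e; have : Fnu Gs i \subset 'ker (coset_morphism U).
    by rewrite ker_trivg_morphim nUM /= e subxx.
  by rewrite ker_coset.
have eNU : coset U @* N = M / U by rewrite eM quotientMidr.
rewrite /descendant; apply/andP; split.
  apply/andP; split.
    by rewrite -tr2 N1 morphim1.
  apply/forallP => j; rewrite -tr2; apply/eqP => e.
  have sjU := triv _ e.
  case: (ltngtP j c) => [jc | | jc].
  - have := Gj (Ordinal jc); rewrite -tr1 /=.
    apply/negP; rewrite negbK -subG1; apply: subset_trans (morphimS _ (subset_trans sjU sUM)) _.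
    by rewrite -thm_ker morphim_ker.
  - by have := ltn_ord j; rewrite ltnS leqNgt => /negP.
  - move: sjU; rewrite jc -/N => sNU.
    move/andP: pUM => [_ /negP]; apply.
    by rewrite eM mul_subG.
rewrite -tr2 -/N eNU.
apply: isog_trans (third_isog sUM nsU nsM) _.
by have := first_isog thm; rewrite thm_ker thm_im.
Qed.

End Setup.

Theorem lemma4p5 (gT : finGroupType) (G : {group gT}) (c n : nat)
  (g : 'I_n -> gT) (F : grp) (f : 'I_n -> F) (mu : F -> gT)
  (sT : finGroupType) (Gs M U : {group sT}) (pi : F -> sT) :
  <<[set g i | i : 'I_n]>> = G ->
  has_Fclass G c -> 0 < c ->
  free_on f ->
  @is_ghom F (fin_grp gT) mu -> (forall i, mu (f i) = g i) ->
  covering_map G mu Gs pi ->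
  is_multiplicator mu pi M ->
  allowable Gs M (Fnu Gs c) U ->
  descendant (Gs / U)%G G c.
Proof.
move=> hG hcl c0 hfree hmu hmuf hcov hM hal.
exact: (main_setup hG hfree hmu hmuf hcov hM hcl c0 hal).
Qed.
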